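(* Consider the Keyfitz–Kranzer system $\partial_t u_1 + \partial_x(u_1^2 - u_2) = 0$, $\partial_t u_2 + \partial_x(\tfrac{1}{3}u_1^3 - u_1) = 0$ with flux $f(u) = (u_1^2 - u_2,\ \tfrac13 u_1^3 - u_1)^T$ for $u=(u_1,u_2)\in\mathbb{R}^2$, entropy $U(u) = \exp(\tfrac12 u_1^2 - u_2)$, entropy variables $w(u) = (u_1 U(u),\ -U(u))^T$ and flux potential $\psi(u) = (\tfrac23 u_1^3 - u_1 u_2)\,U(u)$. For $u_-=(u_{1,-},u_{2,-})$, $u_+=(u_{1,+},u_{2,+})\in\mathbb{R}^2$ write $U_\pm = U(u_\pm)$ and define $f^{\mathrm{num}}(u_-,u_+) = (f^{\mathrm{num}}_1, f^{\mathrm{num}}_2)$ by \[ f^{\mathrm{num}}_1 = \tfrac16\bigl(u_{1,+}^2 + u_{1,+}u_{1,-} + u_{1,-}^2\bigr) + \tfrac12\bigl(\log U_+ + \log U_-\bigr), \] \[ f^{\mathrm{num}}_2 = \tfrac12(u_{1,+}+u_{1,-})\, f^{\mathrm{num}}_1 - \tfrac12\Bigl(\tfrac16 u_{1,+}^3 + u_{1,+}\log U_+ + \tfrac16 u_{1,-}^3 + u_{1,-}\log U_-\Bigr) - \frac{\tfrac12(U_+ + U_-)}{L(U_-,U_+)}\cdot \tfrac12(u_{1,+}+u_{1,-}), \] where $L(a,b) = \frac{b-a}{\log b - \log a}$ for $a\neq b$ and $L(a,a)=a$ (logarithmic mean, $a,b>0$). Then $f^{\mathrm{num}}$ is consistent,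 i.e. $f^{\mathrm{num}}(u,u) = f(u)$ for all $u\in\mathbb{R}^2$, and entropy-conservative, i.e. for all $u_-,u_+\in\mathbb{R}^2$, \[ \bigl(w(u_+) - w(u_-)\bigr)\cdot f^{\mathrm{num}}(u_-,u_+) = \psi(u_+) - \psi(u_-). \]
   Context: Here $\cdot$ denotes the Euclidean inner product on $\mathbb{R}^2$ and $\log$ is the natural logarithm; note $\log U(u) = \tfrac12 u_1^2 - u_2$. The convention $L(a,a)=a$ is the continuous extension of the logarithmic mean to the diagonal. *)

(* Defs.v *)
From Stdlib Require Export Reals.
Open Scope R_scope.

Definition kk_flux (u : R * R) : R * R :=
  let (u1, u2) := u in (u1 ^ 2 - u2, / 3 * u1 ^ 3 - u1).

Definition kk_U (u : R * R) : R :=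
  let (u1, u2) := u in exp (/ 2 * u1 ^ 2 - u2).

Definition kk_w (u : R * R) : R * R := (fst u * kk_U u, - kk_U u).

Definition kk_psi (u : R * R) : R :=
  let (u1, u2) := u in (2 / 3 * u1 ^ 3 - u1 * u2) * kk_U u.

Definition logmean (a b : R) : R :=
  if Req_EM_T a b then a else (b - a) / (ln b - ln a).

Definition dot2 (x y : R * R) : R := fst x * fst y + snd x * snd y.

Definition sub2 (x y : R * R) : R * R := (fst x - fst y, snd x - snd y).

Definition fnum1 (um up : R * R) : R :=
  let a := fst up in let b := fst um in
  / 6 * (a ^ 2 + a * b + b ^ 2) + / 2 * (ln (kk_U up) + ln (kk_U um)).

Definition fnum2 (um up : R * R) : R :=
  let a := fst up in let b := fst um in
  / 2 * (a + b) * fnum1 um up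
  - / 2 * (/ 6 * a ^ 3 + a * ln (kk_U up) + / 6 * b ^ 3 + b * ln (kk_U um))
  - (/ 2 * (kk_U up + kk_U um)) / logmean (kk_U um) (kk_U up) * (/ 2 * (a + b)).

Definition fnum (um up : R * R) : R * R := (fnum1 um up, fnum2 um up).

(* Main.v *)
Require Import Defs.
From Stdlib Require Import Reals Lra.
Open Scope R_scope.

Lemma key (lp lm S : R) :
  (exp lp - exp lm) * (S / logmean (exp lm) (exp lp)) = S * (lp - lm).
Proof.
  unfold logmean. rewrite !ln_exp.
  destruct (Req_EM_T (exp lm) (exp lp)) as [E|E].
  - apply exp_inv in E. subst. ring.
  - assert (lp <> lm) by (intro; subst; apply E; reflexivity).
    assert (exp lp - exp lm <> 0) by (intro; apply E; lra).
    field. split; lra.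
Qed.

Theorem mainTheorem1 :
  (forall u : R * R, fnum u u = kk_flux u) /\
  (forall um up : R * R,
     dot2 (sub2 (kk_w up) (kk_w um)) (fnum um up) = kk_psi up - kk_psi um).
Proof.
  split.
  - intros [a c]. unfold fnum, fnum1, fnum2, kk_flux, kk_U, logmean; cbv beta iota delta [fst snd].
    rewrite ln_exp. destruct (Req_EM_T _ _) as [_|E]; [|now exfalso].
    apply (f_equal2 (@pair R R)). field.
    unfold fnum1; cbv beta iota delta [fst snd]. unfold kk_U. rewrite ?ln_exp.
    set (e := exp _). assert (e > 0) by apply exp_pos.
    field. lra.
  - intros [b cm] [a cp]. unfold dot2, sub2, kk_w, fnum, fnum2, kk_psi, kk_U; unfold fnum1, kk_U; cbv beta iota delta [fst snd].
    rewrite !ln_exp.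
    assert (Ep: cp = /2*a^2 - (/2*a^2 - cp)) by field.
    assert (Em: cm = /2*b^2 - (/2*b^2 - cm)) by field.
    set (lp := /2*a^2 - cp) in *. set (lm := /2*b^2 - cm) in *.
    clearbody lp lm. subst cp cm.
    assert (K := key lp lm (/ 2 * (exp lp + exp lm))).
    set (X := / 2 * (exp lp + exp lm) / logmean (exp lm) (exp lp)) in *. clearbody X.
    transitivity ((a * exp lp - b * exp lm) *
      (/ 6 * (a ^ 2 + a * b + b ^ 2) + / 2 * (lp + lm)) +
      - (exp lp - exp lm) * (/ 2 * (a + b) * (/ 6 * (a ^ 2 + a * b + b ^ 2) + / 2 * (lp + lm))
         - / 2 * (/ 6 * a ^ 3 + a * lp + / 6 * b ^ 3 + b * lm))
      + ((exp lp - exp lm) * X) * (/ 2 * (a + b))).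
    + field.
    + rewrite K. field.
Qed.
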